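(* Let $f:\mathbb{R}^n\to\mathbb{R}$ be continuously differentiable and bounded below, with $\nabla f$ Lipschitz continuous on $\mathbb{R}^n$ with constant $L(f)$, let $s$ be an integer with $0<s<n$, and let $L>L(f)$. Let $\mathbf{x}^*$ be an optimal solution of the problem (P): minimize $f(\mathbf{x})$ subject to $\|\mathbf{x}\|_0\le s$. Then (i) $\mathbf{x}^*$ is an $L$-stationary point of (P); and (ii) the set $P_{C_s}\!\left(\mathbf{x}^*-\frac1L\nabla f(\mathbf{x}^* )\right)$ consists of exactly one element.
   Context: $\|\mathbf{x}\|_0$ is the number of nonzero components of $\mathbf{x}$ and $C_s=\{\mathbf{x}:\|\mathbf{x}\|_0\le s\}$. For a closed set $D$, $P_D(\mathbf{y})=\operatorname{argmin}_{\mathbf{x}\in D}\|\mathbf{x}-\mathbf{y}\|^2$ (possibly multi-valued). A vector $\mathbf{x}^*\in C_s$ is an $L$-stationary point of (P) if $\mathbf{x}^*\in P_{C_s}\!\left(\mathbf{x}^*-\frac1L\nabla f(\mathbf{x}^* )\right)$. ''$\nabla f$ Lipschitz with constant $L(f)$'' means $\|\nabla f(\mathbf{x})-\nabla f(\mathbf{y})\|\le L(f)\|\mathbf{x}-\mathbf{y}\|$ for all $\mathbf{x},\mathbf{y}$. *)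

(* Defs.v *)
From HB Require Import structures.
From mathcomp Require Import all_boot all_order all_algebra.
From mathcomp Require Import all_classical all_reals all_analysis.
Unset Printing Implicit Defensive.
Import Order.TTheory GRing.Theory Num.Theory.
Import numFieldNormedType.Exports.
Local Open Scope classical_set_scope.
Local Open Scope ring_scope.

Definition l0norm {R : realType} {n : nat} (x : 'rV[R]_n) : nat :=
  #|[set i : 'I_n | x ord0 i != 0]|.

Definition Cs {R : realType} (n s : nat) : set 'rV[R]_n :=
  [set x | (l0norm x <= s)%N].

Definition sqnorm {R : realType} {n : nat} (x : 'rV[R]_n) : R :=
  \sum_(i < n) (x ord0 i) ^+ 2.
Definition enorm {R : realType} {n : nat} (x : 'rV[R]_n) : R :=
  Num.sqrt (sqnorm x).

(* Orthogonal projection onto D (as a set, possibly multi-valued) *)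
Definition projC {R : realType} {n : nat} (D : set 'rV[R]_n) (y : 'rV[R]_n)
  : set 'rV[R]_n :=
  [set x | D x /\ forall z, D z -> sqnorm (x - y) <= sqnorm (z - y)].

Definition grad {R : realType} {n : nat} (f : 'rV[R]_n -> R) (x : 'rV[R]_n)
  : 'rV[R]_n :=
  \row_(i < n) ('D_(delta_mx ord0 i) f x).

Definition L_stationary {R : realType} (n s : nat) (f : 'rV[R]_n -> R)
  (L : R) (x : 'rV[R]_n) : Prop :=
  Cs n s x /\ projC (Cs n s) (x - L^-1 *: grad f x) x.

(* Main.v *)
Require Import Defs.
From HB Require Import structures.
From mathcomp Require Import all_boot all_order all_algebra.
From mathcomp Require Import all_classical all_reals all_analysis.
From mathcomp Require Import ring lra.
Import Order.TTheory GRing.Theory Num.Theory.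
Import numFieldNormedType.Exports.
Local Open Scope classical_set_scope.
Local Open Scope ring_scope.

Section S.
Context {R : realType} {n : nat}.
Implicit Types u v d : 'rV[R]_n.

Definition dot u v : R := \sum_(i < n) u ord0 i * v ord0 i.

Lemma sqnorm_ge0 u : 0 <= sqnorm u.
Proof. by apply: sumr_ge0 => i _; rewrite sqr_ge0. Qed.

Lemma sqnorm_eq0 u : sqnorm u = 0 -> u = 0.
Proof.
move=> /eqP; rewrite /sqnorm psumr_eq0 => [/allP H|i _]; last by rewrite sqr_ge0.
apply/rowP => i; rewrite mxE; have := H i (mem_index_enum _).
by rewrite sqrf_eq0 => /eqP.
Qed.

Lemma sqnormD u v : sqnorm (u + v) = sqnorm u + 2 * dot u v + sqnorm v.
Proof.
rewrite /sqnorm /dot mulr_sumr -!big_split /=; apply: eq_bigr => i _.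
rewrite mxE; ring.
Qed.

Lemma sqnormZ (c : R) u : sqnorm (c *: u) = c ^+ 2 * sqnorm u.
Proof. rewrite /sqnorm mulr_sumr; apply: eq_bigr => i _; rewrite mxE; ring. Qed.

Lemma dotZr (c : R) u v : dot u (c *: v) = c * dot u v.
Proof. rewrite /dot mulr_sumr; apply: eq_bigr => i _; rewrite mxE; ring. Qed.

Lemma dotC u v : dot u v = dot v u.
Proof. by apply: eq_bigr => i _; rewrite mulrC. Qed.

Lemma enorm_sq u : enorm u ^+ 2 = sqnorm u.
Proof. by rewrite /enorm sqr_sqrtr // sqnorm_ge0. Qed.

Lemma enorm_ge0 u : 0 <= enorm u.
Proof. exact: sqrtr_ge0. Qed.

Lemma dot_bound u d (a : R) : enorm u <= a * enorm d -> dot u d <= a * sqnorm d.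
Proof.
move=> H.
have [d0|dn0] := eqVneq (sqnorm d) 0.
  rewrite d0 mulr0 (sqnorm_eq0 _ d0) /dot big1 // => i _; rewrite mxE mulr0 //.
have ed : 0 < enorm d by rewrite /enorm sqrtr_gt0 lt0r dn0 sqnorm_ge0.
have a0 : 0 <= a.
  by rewrite -(pmulr_lge0 _ ed); apply: le_trans H; apply: enorm_ge0.
have Hsq : sqnorm u <= a ^+ 2 * sqnorm d.
  rewrite -!enorm_sq -exprMn; rewrite ler_pXn2r // ?nnegrE ?enorm_ge0 //.
  by rewrite mulr_ge0 // enorm_ge0.
have [az|apos] := eqVneq a 0.
  move: Hsq; rewrite az expr2 !mul0r => Hu.
  have /sqnorm_eq0 -> : sqnorm u = 0 by apply/le_anti; rewrite Hu sqnorm_ge0.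
  by rewrite /dot big1 // => i _; rewrite mxE mul0r.
have ap : 0 < a by rewrite lt0r apos.
have H2 : 2 * a * dot u d <= sqnorm u + a ^+ 2 * sqnorm d.
  rewrite /dot /sqnorm mulr_sumr mulr_sumr -big_split /=; apply: ler_sum => i _.
  have := sqr_ge0 (u ord0 i - a * d ord0 i); lra.
rewrite -(ler_pM2l (_ : 0 < 2 * a)); last by rewrite mulr_gt0.
apply: (le_trans H2); have := sqnorm_ge0 d; nra.
Qed.


Definition qpoly (G K : R) : R -> R := (@id R) * cst G + (@id R) ^+ 2 * cst K.
Lemma qpolyE G K s : qpoly G K s = s * G + s ^+ 2 * K. Proof. by rewrite /qpoly !fctE. Qed.
Lemma qpoly_der (G K t : R) : is_derive t 1 (qpoly G K) (G + 2 * t * K).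
Proof.
rewrite /qpoly; apply: is_derive_eq.
rewrite !scaler0 !add0r !fctE /= expr1 /cst.
by rewrite /GRing.scale /= !mulr1 mulrC.
Qed.

Lemma Dgrad (f : 'rV[R]_n -> R) p v : differentiable f p ->
  'D_v f p = dot (grad f p) v.
Proof.
move=> df; rewrite deriveE // {1}(row_sum_delta v) linear_sum /dot.
apply: eq_bigr => i _; rewrite linearZ /= -deriveE // /grad mxE.
by rewrite /GRing.scale /= mulrC.
Qed.

Lemma phi_der (f : 'rV[R]_n -> R) (x d : 'rV[R]_n) (t : R) : (forall p, differentiable f p) ->
  is_derive t 1 (fun s : R => f (x + s *: d)) (dot (grad f (x + t *: d)) d).
Proof.
move=> df.
have E : forall (F G : R -> R), F = G -> (F @ 0^' = G @ 0^') by move=> ? ? ->.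
have key : forall F G : R -> R, (forall h, F h = G h) -> F = G by move=> ? ? ?; apply/funext.
constructor.
  have := @diff_derivable _ _ _ f (x + t *: d) d (df _); rewrite /derivable.
  match goal with |- cvg (?F @ _) -> cvg (?G @ _) => suff -> : G = F by [] end.
  apply: key => h /=; rewrite /shift /=.
  congr (_ *: (f _ - _)); rewrite [h *: 1]mulr1 scalerDl addrCA addrA //.
rewrite -Dgrad //; rewrite /derive.
match goal with |- lim (?G @ _) = lim (?F @ _) => suff -> : G = F by [] end.
apply: key => h /=; rewrite /shift /=.
congr (_ *: (f _ - _)); rewrite [h *: 1]mulr1 scalerDl addrCA addrA //.
Qed.

Lemma dotBl u v w : dot (u - v) w = dot u w - dot v w.
Proof. rewrite /dot -sumrB; apply: eq_bigr => i _; rewrite !mxE; ring. Qed.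

Lemma enormZ (c : R) u : enorm (c *: u) = `|c| * enorm u.
Proof. by rewrite /enorm sqnormZ sqrtrM ?sqr_ge0 // sqrtr_sqr. Qed.

Lemma descent (f : 'rV[R]_n -> R) (Lf : R) x z :
  (forall p, differentiable f p) ->
  (forall x y, enorm (grad f x - grad f y) <= Lf * enorm (x - y)) ->
  f z <= f x + dot (grad f x) (z - x) + Lf / 2 * sqnorm (z - x).
Proof.
move=> df Lip.
set d := z - x; set G := dot (grad f x) d; set K := Lf / 2 * sqnorm d.
set phi := fun s : R => f (x + s *: d).
have dpsi (t : R) : is_derive t 1 (phi - qpoly G K)
   (dot (grad f (x + t *: d)) d - (G + 2 * t * K)).
  apply: is_deriveB; [exact: phi_der | exact: qpoly_der].
have cont : {within `[0, 1], continuous (phi - qpoly G K)}.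
  apply: derivable_within_continuous => t _; exact: (@ex_derive _ _ _ _ _ _ _ (dpsi t)).
have [c] := MVT ltr01 (fun t _ => dpsi t) cont.
rewrite in_itv /= => /andP [c0 c1].
rewrite !fctE !qpolyE /phi /=.
rewrite [f (x + 0 *: d)](_ : _ = f x); last by rewrite scale0r addr0.
rewrite [f (x + 1 *: d)](_ : _ = f z); last by rewrite scale1r /d addrC subrK.
move=> E.


have B : dot (grad f (x + c *: d) - grad f x) d <= (Lf * c) * sqnorm d.
  apply: dot_bound; apply: (le_trans (Lip _ _)).
  rewrite [x + c *: d - x](_ : _ = c *: d); last by rewrite addrAC subrr add0r.
  by rewrite enormZ (ger0_norm (ltW c0)) mulrA.
rewrite dotBl -/G in B.
rewrite !expr2 !mul1r !mul0r ?add0r ?subr0 ?mulr1 ?subr0 ?mul0r in E.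
move: E B; rewrite /K; set D := dot _ d; set S := sqnorm d; move=> E B.
nra.
Qed.

Lemma sqnorm_const1 : sqnorm (const_mx 1 : 'rV[R]_n) = n%:R.
Proof.
rewrite /sqnorm (eq_bigr (fun _ => 1)) => [|i _]; last by rewrite mxE expr1n.
by rewrite sumr_const card_ord.
Qed.

Lemma proj_expand (x z g : 'rV[R]_n) (c : R) :
  sqnorm (z - (x - c *: g)) = sqnorm (x - (x - c *: g)) + sqnorm (z - x)
     + 2 * c * dot g (z - x).
Proof.
have -> : z - (x - c *: g) = (z - x) + c *: g by apply/rowP => i; rewrite !mxE; ring.
have -> : x - (x - c *: g) = c *: g by apply/rowP => i; rewrite !mxE; ring.
rewrite sqnormD dotZr dotC; ring.
Qed.
End S.

Theorem theorem2p2 (R : realType) (n s : nat) (f : 'rV[R]_n -> R) (Lf L : R)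
  (xstar : 'rV[R]_n) :
  (forall x, differentiable f x) ->
  continuous (grad f) ->
  (exists lb : R, forall x, lb <= f x) ->
  (forall x y, enorm (grad f x - grad f y) <= Lf * enorm (x - y)) ->
  (0 < s)%N -> (s < n)%N ->
  Lf < L ->
  Cs n s xstar ->
  (forall y, Cs n s y -> f xstar <= f y) ->
  L_stationary n s f L xstar /\
  (exists p, projC (Cs n s) (xstar - L^-1 *: grad f xstar) = [set p]).
Proof.
move=> df _ _ Lip s0 sn LfL Cx opt.
have n0 : (0 < n)%N by apply: leq_trans sn.
have Lf0 : 0 <= Lf.
  have := Lip (const_mx 1 : 'rV[R]_n) 0; rewrite subr0.
  have e0 : 0 < enorm (const_mx 1 : 'rV[R]_n).
    by rewrite /enorm sqnorm_const1 sqrtr_gt0 ltr0n.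
  move=> H; rewrite -(pmulr_lge0 _ e0); apply: le_trans H; exact: enorm_ge0.
have L0 : 0 < L by apply: le_lt_trans LfL.
set c := L^-1.
have c0 : 0 < c by rewrite invr_gt0.
have cLf : c * Lf < 1 by rewrite /c mulrC ltr_pdivrMr // mul1r.
set g := grad f xstar.
have lowb z : Cs n s z -> (1 - c * Lf) * sqnorm (z - xstar) <=
    sqnorm (z - (xstar - c *: g)) - sqnorm (xstar - (xstar - c *: g)).
  move=> Cz; rewrite proj_expand.
  have D := descent f Lf xstar z df Lip; have O := opt z Cz.
  rewrite -/g in D; set S := sqnorm (z - xstar) in D *; set T := dot g _ in D *.
  have : - (Lf / 2 * S) <= T by lra.
  move=> H; have := mulr_ge0 (ltW c0) (sqnorm_ge0 (z - xstar)); rewrite -/S => _.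
  nra.
have statx : projC (Cs n s) (xstar - c *: g) xstar.
  split => // z Cz; have := lowb z Cz.
  have H0 : 0 < 1 - c * Lf by rewrite subr_gt0.
  have := mulr_ge0 (ltW H0) (sqnorm_ge0 (z - xstar)); lra.
split; first by split.
exists xstar; apply/seteqP; split => p /=; last by move=> ->.
move=> [Cp /(_ xstar Cx) Hp].
have := lowb p Cp.
have H0 : 0 < 1 - c * Lf by rewrite subr_gt0.
move=> H.
have S0 : sqnorm (p - xstar) <= 0.
  rewrite -(pmulr_rle0 _ H0); lra.
have /sqnorm_eq0 /eqP : sqnorm (p - xstar) = 0 by apply/le_anti; rewrite S0 sqnorm_ge0.
by rewrite subr_eq0 => /eqP.
Qed.
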